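(* Let $\underline{V}=(v_1,\dots,v_n)$ be a random signal whose entries are independent, each $v_i$ being equal to $0$ with probability $1-\alpha$ and drawn from a distribution $f$ with probability $\alpha$. Let $\mathcal{K}=\{v_i : v_i\neq 0\}$ be the support set. Consider a bipartite graph with variable nodes $v_1,\dots,v_n$ and check nodes, in which each edge between $v_i$ and check node $c_j$ carries a weight $w_{ij}$, the weights being drawn i.i.d. from a distribution $g$ independently of the signal. The value of check node $c_j$ is $c_j=\sum_{i:\, v_i\in\mathcal{M}(c_j)} w_{ij}v_i$, where $\mathcal{M}(c)$ denotes the set of variable nodes adjacent to $c$. Suppose at least one of $f$ or $g$ is a continuous distribution. Let $c_i$ and $c_j$ be two distinct check nodes and let $\mathcal{V}_i=\mathcal{M}(c_i)\cap\mathcal{K}$ and $\mathcal{V}_j=\mathcal{M}(c_j)\cap\mathcal{K}$. Then: if $c_i=0$, then $\mathcal{V}_i=\emptyset$ with probability one; and if $\mathcal{V}_i\neq\mathcal{V}_j$, then $\Pr(c_i=c_j)=0$.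
   Context: This is the compressed sensing measurement model $\underline{C}=\underline{V}\mathbf{G}$, where the sensing matrix $\mathbf{G}$ is the weighted incidence matrix of the bipartite graph (entry in row $i$, column $j$ equals $w_{ij}$ if $v_i$ and $c_j$ are adjacent and $0$ otherwise). Variable nodes correspond to signal entries and check nodes to measurements.
   Formalization: The weight law g has no atom at 0 (g({0}) = 0), and both conclusions are almost-sure implications; the second says the event $c_i=c_j$ with $\mathcal{V}_i\neq\mathcal{V}_j$ has probability zero. Apart from conventions, each condition added here is assumed in the paper as well or is needed for the statement above to hold. *)

(* Defs.v *)
From HB Require Import structures.
From mathcomp Require Import all_boot all_order all_algebra.
From mathcomp Require Import all_classical all_reals all_analysis.
Set Implicit Arguments. Unset Strict Implicit. Unset Printing Implicit Defensive.
Import Order.TTheory GRing.Theory Num.Theory.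
Local Open Scope classical_set_scope.
Local Open Scope ring_scope.

Definition mutual_indep d (T : measurableType d) (R : realType)
  (mu : probability T R) (I : finType) (S : pred I) (X : I -> T -> R) : Prop :=
  forall B : I -> set R, (forall x, measurable (B x)) ->
    fine (mu (\bigcap_(x in [set x | S x]) (X x @^-1` B x))) =
    \prod_(x | S x) fine (mu (X x @^-1` B x)).

(* A continuous (atomless) distribution on R. *)
Definition atomless (R : realType) (f : probability R R) : Prop :=
  forall x : R, f [set x] = 0%E.

Definition check_value (R : realType) (T : Type) (n m : nat)
  (adj : 'I_n -> 'I_m -> bool) (v : 'I_n -> T -> R) (w : 'I_n -> 'I_m -> T -> R)
  (k : 'I_m) (t : T) : R :=
  \sum_(i < n | adj i k) w i k t * v i t.

Definition support_nbr (R : realType) (T : Type) (n m : nat)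
  (adj : 'I_n -> 'I_m -> bool) (v : 'I_n -> T -> R) (k : 'I_m) (t : T)
  : {set 'I_n} :=
  [set i | adj i k && (v i t != 0)].

(* Main.v *)
Require Import Defs.
From HB Require Import structures.
From mathcomp Require Import all_boot all_order all_algebra.
From mathcomp Require Import all_classical all_reals all_analysis.
Import Order.TTheory GRing.Theory Num.Theory.
Local Open Scope classical_set_scope.
Local Open Scope ring_scope.
Section core.
Context (R : realType) d (T : measurableType d) (mu : probability T R).

Lemma indep_ext (G : set (set T)) (E : set T) : G `<=` measurable ->
  setI_closed G -> G setT -> measurable E ->
  (forall F, G F -> mu (F `&` E) = mu E * mu F)%E ->
  forall F, <<s G >> F -> mu (F `&` E) = (mu E * mu F)%E.
Proof.
move=> Gm GI GT mE h.
have E0 : 0 <= fine (mu E) by apply: fine_ge0; exact: measure_ge0.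
pose r : {nonneg R} := NngNum E0.
have fE : (fine (mu E))%:E = mu E by rewrite fineK// fin_num_measure.
move=> F GF.
have := @g_sigma_algebra_measure_unique _ _ _ G Gm (fun=> setT) (fun _ => GT) _
  (mrestr mu mE) (mscale r mu) GI _ _ F GF.
move=> H; rewrite -fE; apply: H.
- by rewrite bigcup_const.
- move=> A GA; change (mu (A `&` E) = (fine (mu E))%:E * mu A)%E.
  by rewrite fE h.
- move=> k; change (mu (setT `&` E) < +oo)%E.
  rewrite ltey_eq fin_num_measure//; exact: measurableI.
Qed.

Lemma core_prod (U : T -> R) (W : T -> R * R) :
  measurable_fun setT U -> measurable_fun setT W ->
  (forall A C, measurable A -> measurable C ->
    mu (W @^-1` C `&` U @^-1` A) = (mu (W @^-1` C) * mu (U @^-1` A))%E) ->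
  (forall x, mu (U @^-1` ([set x] `\` [set 0])) = 0%E) ->
  mu.-negligible [set t | U t != 0 /\ (W t).1 * U t + (W t).2 = 0 /\ (W t).1 != 0].
Proof.
move=> mU mW indep atom.
have mWU : measurable_fun setT (fun t => (W t, U t)) by exact: measurable_fun_pair.
pose pU : {mfun T >-> R} := HB.pack U (isMeasurableFun.Build _ _ _ _ U mU).
pose pW : {mfun T >-> (R * R)%type} := HB.pack W (isMeasurableFun.Build _ _ _ _ W mW).
pose pWU : {mfun T >-> ((R * R) * R)%type} :=
  HB.pack (fun t => (W t, U t)) (isMeasurableFun.Build _ _ _ _ _ mWU).
pose PU := distribution mu pU.
pose PW := distribution mu pW.
pose PWU := distribution mu pWU.
pose D : set ((R * R) * R)%type := (snd @^-1` (~` [set 0])) `&`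
   ((fun p => p.1.1 * p.2 + p.1.2) @^-1` [set 0]) `&`
   ((fun p => p.1.1) @^-1` (~` [set 0])).
have mD : measurable D.
  apply: measurableI; first apply: measurableI.
  - by rewrite -[X in measurable X]setTI; apply: measurable_snd => //; exact: measurableC.
  - rewrite -[X in measurable X]setTI; apply: measurable_realfun.measurable_funD => //.
      apply: measurable_realfun.measurable_funM => //.
      exact: measurableT_comp.
    exact: measurableT_comp.
  - rewrite -[X in measurable X]setTI; apply: measurableT_comp => //; exact: measurableC.
have -> : [set t | U t != 0 /\ (W t).1 * U t + (W t).2 = 0 /\ (W t).1 != 0] =
  (fun t => (W t, U t)) @^-1` D.
  apply/seteqP; split => t /=.
    by case=> /eqP U0 [h /eqP W0]; split; [split|].
  by case=> [[/= U0 h] W0]; split; [apply/eqP|split=> //; apply/eqP].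
have E : (PW \x PU)%E D = PWU D.
  apply: product_measure_unique => // A B mA mB.
  rewrite /PWU /PW /PU /distribution /pushforward /=.
  rewrite -indep//; congr (mu _); apply/seteqP; split => t /=; by case.
exists ((fun t => (W t, U t)) @^-1` D); split => //.
  by rewrite -[X in measurable X]setTI; exact: (mWU _ _ mD).
change (PWU D = 0%E); rewrite -E.
rewrite /product_measure1 /=; apply: integral0_eq => x _ /=.
apply/eqP; rewrite -measure_le0 -(atom (- x.2 / x.1)).
rewrite /PU /distribution /pushforward /=.
apply: le_measure; rewrite ?inE.
- exact: measurable_xsection.
- exact: measurableD.
- move=> t; rewrite /xsection /= inE => -[[/= t0 h] x0]; split => //.
  have x0' : x.1 != 0 by apply/eqP.
  apply: (mulIf x0'); rewrite divfK//.
  by rewrite mulrC; apply/eqP; rewrite -subr_eq0 opprK h.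
Qed.

Section gen.
Variables (I : finType) (S : pred I) (X : I -> T -> R).
Hypothesis mX : forall i, measurable_fun setT (X i).
Hypothesis ind : mutual_indep mu S X.
Variable x0 : I.
Hypothesis Sx0 : S x0.

Definition others y := S y && (y != x0).
Definition rectG : set (set T) := [set F | exists B : I -> set R,
  (forall y, measurable (B y)) /\
  F = \bigcap_(y in [set y | others y]) X y @^-1` B y].

Lemma rectG_meas : rectG `<=` measurable.
Proof.
move=> _ [B [mB ->]]; apply: fin_bigcap_measurable; first exact: finite_finset.
by move=> y _; rewrite -[X in measurable X]setTI; exact: mX.
Qed.

Lemma rectG_I : setI_closed rectG.
Proof.
move=> _ _ [B [mB ->]] [C [mC ->]]; exists (fun y => B y `&` C y); split.
  by move=> y; exact: measurableI.
by apply/seteqP; split => t /=; [move=> [h1 h2] y Hy; split; [exact: h1|exact: h2]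
  |move=> h; split => y Hy; have [] := h y Hy].
Qed.

Lemma rectG_T : rectG setT.
Proof.
exists (fun=> setT); split => //.
by apply/seteqP; split => t //= _ y _.
Qed.

Lemma finemu (A : set T) : measurable A -> (fine (mu A))%:E = mu A.
Proof. by move=> mA; rewrite fineK// fin_num_measure. Qed.

Lemma rectG_indep (A : set R) : measurable A -> forall F, rectG F ->
  mu (F `&` X x0 @^-1` A) = (mu (X x0 @^-1` A) * mu F)%E.
Proof.
move=> mA _ [B [mB ->]].
have key : forall A', measurable A' ->
  fine (mu (\bigcap_(y in [set y | others y]) X y @^-1` B y `&` X x0 @^-1` A')) =
  fine (mu (X x0 @^-1` A')) * \prod_(y | others y) fine (mu (X y @^-1` B y)).
  move=> A' mA'.
  have := ind (fun y => if y == x0 then A' else B y) _.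
  rewrite (bigD1 x0) //= eqxx.
  have -> : \bigcap_(x in [set x | S x]) X x @^-1` (if x == x0 then A' else B x) =
     \bigcap_(y in [set y | others y]) X y @^-1` B y `&` X x0 @^-1` A'.
    apply/seteqP; split => t /=.
      move=> h; split; last by have := h x0 Sx0; rewrite eqxx.
      move=> y /andP[Sy yx0]; have := h y Sy; by rewrite (negbTE yx0).
    move=> [h1 h2] y Sy; case: ifPn => [/eqP -> //|yx0]; apply: h1 => /=; by rewrite /others Sy yx0.
  move=> H; rewrite H; last by move=> y; case: ifPn.
  by congr (_ * _); apply: eq_bigr => y /andP[_ /negbTE ->].
have h1 := key A mA.
have h2 := key setT measurableT.
rewrite preimage_setT setIT probability_setT /= mul1r in h2.
rewrite -finemu; last first.
  apply: measurableI; last by rewrite -[X in measurable X]setTI; exact: mX.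
  by apply: rectG_meas; exists B.
rewrite h1 -h2 EFinM !finemu//.
- by apply: rectG_meas; exists B.
- by rewrite -[X in measurable X]setTI; exact: mX.
Qed.

Lemma sigma_indep A F : measurable A -> <<s rectG >> F ->
  mu (F `&` X x0 @^-1` A) = (mu (X x0 @^-1` A) * mu F)%E.
Proof.
move=> mA; apply: indep_ext.
- exact: rectG_meas.
- exact: rectG_I.
- exact: rectG_T.
- by rewrite -[X in measurable X]setTI; exact: mX.
- exact: rectG_indep.
Qed.

Lemma X_meas' y : others y ->
  measurable_fun (setT : set (g_sigma_algebraType rectG)) (X y).
Proof.
move=> oy _ B mB; rewrite setTI; apply: sub_sigma_algebra.
exists (fun z => if z == y then B else setT); split; first by move=> z; case: ifPn.
apply/seteqP; split => t /=.
  by move=> h z oz; case: ifPn => [/eqP -> //|].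
by move=> h; have := h y oy; rewrite eqxx.
Qed.

Lemma gen_core (W : T -> R * R) :
  measurable_fun (setT : set (g_sigma_algebraType rectG)) W ->
  measurable_fun setT W ->
  (forall x, mu (X x0 @^-1` ([set x] `\` [set 0])) = 0%E) ->
  mu.-negligible [set t | X x0 t != 0 /\ (W t).1 * X x0 t + (W t).2 = 0 /\ (W t).1 != 0].
Proof.
move=> mW' mW atom; apply: core_prod => // A C mA mC.
have := mW' measurableT C mC; rewrite setTI => WC.
by rewrite sigma_indep // muleC.
Qed.

End gen.
End core.

Lemma rest_meas (R : realType) d0 (T0 : measurableType d0) (n m : nat)
  (adj : 'I_n -> 'I_m -> bool)
  (v0 : 'I_n -> T0 -> R) (w0 : 'I_n -> 'I_m -> T0 -> R) (l : 'I_n)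
  (coef : 'I_n -> 'I_m -> R) :
  (forall i, i != l -> measurable_fun setT (v0 i)) ->
  (forall i k, i != l -> adj i k -> measurable_fun setT (w0 i k)) ->
  (forall i k, coef i k != 0 -> adj i k) ->
  measurable_fun setT (fun t => \sum_(i < n)
     (if i != l then \sum_(k < m) coef i k * (w0 i k t * v0 i t) else 0)).
Proof.
move=> hv hw hc.
apply: (@measurable_sum _ _ _ _ _ (index_enum 'I_n) (fun i t => if i != l then \sum_(k < m) coef i k * (w0 i k t * v0 i t) else 0)) => i /=.
destruct (i != l) eqn:il; last exact: measurable_cst.
apply: (@measurable_sum _ _ _ _ _ (index_enum 'I_m) (fun k t => coef i k * (w0 i k t * v0 i t))) => k /=.
have [c0|c0] := eqVneq (coef i k) 0.
  rewrite (_ : (fun t => _) = cst 0); first exact: measurable_cst.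
  by apply/funext => t; rewrite c0 mul0r.
apply: measurable_realfun.measurable_funM; first exact: measurable_cst.
apply: measurable_realfun.measurable_funM; [exact: hw (hc _ _ c0)|exact: hv].
Qed.

Section main.
Context (R : realType) (d : measure_display) (T : measurableType d)
  (mu : probability T R) (n m : nat) (adj : 'I_n -> 'I_m -> bool)
  (alpha : R) (f g : probability R R)
  (v : 'I_n -> T -> R) (w : 'I_n -> 'I_m -> T -> R).
Hypothesis hv : forall i, measurable_fun setT (v i).
Hypothesis hw : forall i k, measurable_fun setT (w i k).
Hypothesis hlawv : forall i (B : set R), measurable B ->
     mu (v i @^-1` B) = ((1 - alpha)%:E * \d_(0%R : R) B + alpha%:E * f B)%E.
Hypothesis hlaww : forall i k (B : set R), adj i k -> measurable B -> mu (w i k @^-1` B) = g B.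
Hypothesis hind : mutual_indep mu
    (fun x : 'I_n + ('I_n * 'I_m) =>
       match x with inl _ => true | inr p => adj p.1 p.2 end)
    (fun x => match x with inl i => v i | inr p => w p.1 p.2 end).
Hypothesis hg0 : g [set 0] = 0%E.
Hypothesis hatom : atomless f \/ atomless g.

Definition SS := (fun x : 'I_n + ('I_n * 'I_m) =>
       match x with inl _ => true | inr p => adj p.1 p.2 end).
Definition XX := (fun x : 'I_n + ('I_n * 'I_m) =>
       match x with inl i => v i | inr p => w p.1 p.2 end).

Lemma mXX x : measurable_fun setT (XX x).
Proof. by case: x => [i|[i k]] /=. Qed.

Definition QQ (coef : 'I_n -> 'I_m -> R) t :=
  \sum_(i < n) \sum_(k < m) coef i k * (w i k t * v i t).
Definition rest (l : 'I_n) (coef : 'I_n -> 'I_m -> R) t := \sum_(i < n)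
     (if i != l then \sum_(k < m) coef i k * (w i k t * v i t) else 0).

Lemma Qsplit l k0 coef : (forall k, k != k0 -> coef l k = 0) ->
  forall t, QQ coef t = coef l k0 * (w l k0 t * v l t) + rest l coef t.
Proof.
move=> hc t; rewrite /QQ /rest (bigD1 l)//= (bigD1 k0)//= big1 ?addr0; last first.
  by move=> k /hc ->; rewrite mul0r.
rewrite [in RHS](bigD1 l)//= eqxx add0r; congr (_ + _).
by apply: eq_bigr => i ->.
Qed.

Lemma null_w l k0 : adj l k0 -> mu.-negligible (w l k0 @^-1` [set 0]).
Proof.
move=> a; exists (w l k0 @^-1` [set 0]); split => //.
  by rewrite -[X in measurable X]setTI; exact: hw.
by rewrite hlaww.
Qed.

Lemma event_null l k0 coef : adj l k0 -> coef l k0 != 0 ->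
  (forall k, k != k0 -> coef l k = 0) -> (forall i k, coef i k != 0 -> adj i k) ->
  mu.-negligible [set t | v l t != 0 /\ QQ coef t = 0].
Proof.
move=> a c0 hc hadj.
case: hatom => [fa|ga].
- pose x0 : 'I_n + ('I_n * 'I_m) := inl l.
  have Sx0 : SS x0 by [].
  pose W t := (coef l k0 * w l k0 t, rest l coef t).
  have N1 : mu.-negligible [set t | XX x0 t != 0 /\ (W t).1 * XX x0 t + (W t).2 = 0 /\ (W t).1 != 0].
    apply: (@gen_core R d T mu _ SS XX mXX hind x0 Sx0 W).
    + apply: measurable_fun_pair.
      * apply: measurable_realfun.measurable_funM; first exact: measurable_cst.
        by apply: (@X_meas' R d T _ SS XX x0 (inr (l, k0))); rewrite /others /= a.
      * apply: (@rest_meas _ _ _ _ _ adj) => // [i il|i k il aik].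
          by apply: (@X_meas' R d T _ SS XX x0 (inl i)); rewrite /others /=.
        by apply: (@X_meas' R d T _ SS XX x0 (inr (i, k))); rewrite /others /= aik.
    + apply: measurable_fun_pair.
      * apply: measurable_realfun.measurable_funM; first exact: measurable_cst.
        exact: hw.
      * by apply: (@rest_meas _ _ _ _ _ adj).
    + move=> x; rewrite /= hlawv; last exact: measurableD.
      rewrite diracE memNset; last by move=> [_]; apply.
      rewrite (_ : f _ = 0%E) ?mule0 ?adde0 //.
      apply/eqP; rewrite -measure_le0 -(fa x); apply: le_measure; rewrite ?inE//; try exact: measurableD; by move=> y [].
  move: (negligibleU N1 (null_w l k0 a)); apply: negligibleS => t /= [vt Qt].
  have [w0|w0] := eqVneq (w l k0 t) 0; [by right|left].
  split => //; split; last by rewrite mulf_neq0.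
  by rewrite -mulrA -(Qsplit l k0 coef hc).
- pose x0 : 'I_n + ('I_n * 'I_m) := inr (l, k0).
  have Sx0 : SS x0 by [].
  pose W t := (coef l k0 * v l t, rest l coef t).
  have N1 : mu.-negligible [set t | XX x0 t != 0 /\ (W t).1 * XX x0 t + (W t).2 = 0 /\ (W t).1 != 0].
    apply: (@gen_core R d T mu _ SS XX mXX hind x0 Sx0 W).
    + apply: measurable_fun_pair.
      * apply: measurable_realfun.measurable_funM; first exact: measurable_cst.
        by apply: (@X_meas' R d T _ SS XX x0 (inl l)); rewrite /others /=.
      * apply: (@rest_meas _ _ _ _ _ adj) => // [i il|i k il aik].
          by apply: (@X_meas' R d T _ SS XX x0 (inl i)); rewrite /others /=.
        apply: (@X_meas' R d T _ SS XX x0 (inr (i, k))); rewrite /others /= aik /=.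
        by apply/negP => /eqP [il']; rewrite il' eqxx in il.
    + apply: measurable_fun_pair.
      * apply: measurable_realfun.measurable_funM; first exact: measurable_cst.
        exact: hv.
      * by apply: (@rest_meas _ _ _ _ _ adj).
    + move=> x; rewrite /= hlaww //; last exact: measurableD.
      apply/eqP; rewrite -measure_le0 -(ga x); apply: le_measure; rewrite ?inE//; try exact: measurableD; by move=> y [].
  move: (negligibleU N1 (null_w l k0 a)); apply: negligibleS => t /= [vt Qt].
  have [w0|w0] := eqVneq (w l k0 t) 0; [by right|left].
  split => //; split; last by rewrite mulf_neq0.
  by rewrite -mulrA [v l t * _]mulrC -(Qsplit l k0 coef hc).
Qed.

Lemma QQB c1 c2 t : QQ (fun i k => c1 i k - c2 i k) t = QQ c1 t - QQ c2 t.
Proof.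
rewrite /QQ.
transitivity (\sum_(i < n) (\sum_(k < m) c1 i k * (w i k t * v i t) -
      \sum_(k < m) c2 i k * (w i k t * v i t))); last by rewrite sumrB.
apply: eq_bigr => i _.
transitivity (\sum_(k < m) (c1 i k * (w i k t * v i t) - c2 i k * (w i k t * v i t))); last by rewrite sumrB.
by apply: eq_bigr => k _; rewrite mulrBl.
Qed.

Definition coef1 (k0 : 'I_m) (i : 'I_n) (k : 'I_m) : R :=
  if (k == k0) && adj i k0 then 1 else 0.

Lemma QQ1 k0 t : QQ (coef1 k0) t = check_value adj v w k0 t.
Proof.
rewrite /QQ /check_value [RHS]big_mkcond /=; apply: eq_bigr => i _.
rewrite (bigD1 k0) //= big1 ?addr0; last first.
  by move=> k /negbTE kk0; rewrite /coef1 kk0 mul0r.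
by rewrite /coef1 eqxx /=; case: (adj i k0); rewrite ?mul1r ?mul0r.
Qed.

Lemma neg_bigU (F : 'I_n -> set T) : (forall l, mu.-negligible (F l)) ->
  mu.-negligible (\big[setU/set0]_(l < n) F l).
Proof.
move=> h; elim/big_ind: _ => //; [exact: negligible_set0|exact: negligibleU].
Qed.

Lemma part1 k : {ae mu, forall t, check_value adj v w k t = 0 ->
  support_nbr adj v k t = finset.set0}.
Proof.
have N : mu.-negligible (\big[setU/set0]_(l < n) (if adj l k then
   [set t | v l t != 0 /\ QQ (coef1 k) t = 0] else set0)).
  apply: neg_bigU => l; case: ifPn => a; last exact: negligible_set0.
  apply: (event_null l k) => //.
  - by rewrite /coef1 eqxx a oner_neq0.
  - by move=> k' /negbTE kk; rewrite /coef1 kk.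
  - by move=> i k'; rewrite /coef1; case: ifPn => [/andP[/eqP -> //]|]; rewrite eqxx.
move: N; apply: negligibleS => t /= H.
have [c0|c0] := eqVneq (check_value adj v w k t) 0; last first.
  by exfalso; apply: H => /eqP; rewrite (negbTE c0).
case: (set_0Vmem (support_nbr adj v k t)) => [e|[l]]; first by exfalso; exact: H.
rewrite inE => /andP[a vt].
rewrite (bigD1 l) //= a; left; split => //; by rewrite QQ1.
Qed.

Lemma part2 k1 k2 : k1 != k2 ->
  {ae mu, forall t, support_nbr adj v k1 t != support_nbr adj v k2 t ->
                    check_value adj v w k1 t != check_value adj v w k2 t}.
Proof.
move=> k12.
pose cf := fun i k => coef1 k1 i k - coef1 k2 i k.
have hadj : forall i k, cf i k != 0 -> adj i k.
  move=> i k; rewrite /cf /coef1.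
  case: ifPn => [/andP[/eqP -> //]|_]; case: ifPn => [/andP[/eqP -> //]|_].
  by rewrite subrr eqxx.
have N : mu.-negligible (\big[setU/set0]_(l < n) (if adj l k1 != adj l k2 then
   [set t | v l t != 0 /\ QQ cf t = 0] else set0)).
  apply: neg_bigU => l; case: ifPn => a; last exact: negligible_set0.
  have [a1|a1] := boolP (adj l k1).
    have a2 : adj l k2 = false by move: a; rewrite a1; case: (adj l k2).
    apply: (event_null l k1) => //.
    - by rewrite /cf /coef1 eqxx a1 (negbTE k12) /= subr0 oner_neq0.
    - by move=> k kk; rewrite /cf /coef1 (negbTE kk) a2 andbF subrr.
  have a2 : adj l k2 = true by move: a; rewrite (negbTE a1); case: (adj l k2).
  apply: (event_null l k2) => //.
  - by rewrite /cf /coef1 eqxx a2 (negbTE a1) andbF /= sub0r oppr_eq0 oner_neq0.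
  - by move=> k kk; rewrite /cf /coef1 (negbTE kk) (negbTE a1) andbF subrr.
move: N; apply: negligibleS => t /= H.
have S12 : support_nbr adj v k1 t != support_nbr adj v k2 t.
  by apply/negP => /eqP e; apply: H; rewrite e eqxx.
have c12 : check_value adj v w k1 t = check_value adj v w k2 t.
  by have [//|ne] := eqVneq (check_value adj v w k1 t) (check_value adj v w k2 t);
     exfalso; apply: H.
have [l hl] : exists l, (l \in support_nbr adj v k1 t) != (l \in support_nbr adj v k2 t).
  apply/existsP; apply: contraNT S12 => /existsPn h; apply/eqP/setP => l.
  by move: (h l); rewrite negbK => /eqP.
move: hl; rewrite !inE; have [vt|vt] := boolP (v l t != 0); rewrite ?andbT ?andbF // => a12.
rewrite (bigD1 l) //= a12; left; split => //.
by rewrite /cf QQB !QQ1 c12 subrr.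
Qed.
End main.

Theorem theorem1 (R : realType) (d : measure_display) (T : measurableType d)
  (mu : probability T R) (n m : nat) (adj : 'I_n -> 'I_m -> bool)
  (alpha : R) (f g : probability R R)
  (v : 'I_n -> T -> R) (w : 'I_n -> 'I_m -> T -> R) :
  0 <= alpha <= 1 ->
  (forall i, measurable_fun setT (v i)) ->
  (forall i k, measurable_fun setT (w i k)) ->
  (* law of each signal entry: 0 w.p. 1 - alpha, drawn from f w.p. alpha *)
  (forall i (B : set R), measurable B ->
     mu (v i @^-1` B) = ((1 - alpha)%:E * \d_(0%R : R) B + alpha%:E * f B)%E) ->
  (* edge weights are drawn from g *)
  (forall i k (B : set R), adj i k -> measurable B -> mu (w i k @^-1` B) = g B) ->
  (* signal entries and edge weights are all mutually independent *)
  mutual_indep mu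
    (fun x : 'I_n + ('I_n * 'I_m) =>
       match x with inl _ => true | inr p => adj p.1 p.2 end)
    (fun x => match x with inl i => v i | inr p => w p.1 p.2 end) ->
  (* edge weights are nonzero (almost surely) *)
  g [set 0] = 0%E ->
  (* at least one of f, g is continuous *)
  atomless f \/ atomless g ->
  (forall k : 'I_m,
     {ae mu, forall t, check_value adj v w k t = 0 -> support_nbr adj v k t = finset.set0})
  /\
  (forall k1 k2 : 'I_m, k1 != k2 ->
     {ae mu, forall t, support_nbr adj v k1 t != support_nbr adj v k2 t ->
                       check_value adj v w k1 t != check_value adj v w k2 t}).
Proof.
move=> _ hv hw hlawv hlaww hind hg0 hatom; split.
- by move=> k; exact: (@part1 R d T mu n m adj alpha f g v w hv hw hlawv hlaww hind hg0 hatom k).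
- by move=> k1 k2 k12; exact: (@part2 R d T mu n m adj alpha f g v w hv hw hlawv hlaww hind hg0 hatom k1 k2 k12).
Qed.
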